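(* Under the assumptions of the explicit-formulae proposition (piecewise linear concave non-positive increasing $v$ on grid $x_1<\dots<x_N$, $-\infty$ below $x_1$ and constant above $x_N$; $u$ concave increasing with $u^\dagger$ continuous on $(0,\infty)$ and $\lim_{p\to0}u^\dagger(p)=\infty$; $s\in(0,1)$), $\lim_{\eta\to\infty}X^\eta=\gamma_{\min}+s^Ce^{-r\delta t}x_1$.
   Context: $\gamma_{\min}=\inf\{x:u(x)>-\infty\}$. $\Phi$ is the standard normal distribution function, $M=|\mu-r|\sqrt{\delta t}/\sigma$, $Q(x)=\Phi(M+\Phi^{-1}(x))$, $q^A_{BS}=Q'$. For concave increasing $g$, $g^\dagger(p)=\inf\{x:p\in\partial g(x)\}$, $\partial g$ the superdifferential. $C\in\{0,1\}$. For $\eta>0$: $f^\eta(x)=v^\dagger(\eta s^{C-1}e^{-r\delta t}q^A_{BS}(x))$, $\gamma^\eta=u^\dagger\big(-\frac{\eta}{\delta t}\big(-1+s\int_0^1(1+v(f^\eta(x)))\mathrm dx\big)^{-1}\big)$, $X^\eta=\gamma^\eta+s^C\int_0^1e^{-r\delta t}q^A_{BS}(x)f^\eta(x)\mathrm dx$. *)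

(* Defs.v *)
From Stdlib Require Import Reals Lra ClassicalEpsilon.
Open Scope R_scope.

Definition inhR : inhabited R := inhabits 0.

(** Extended-real valued functions R -> [-oo, +oo) : value [val x] on the
    effective domain [dom], and -oo outside of it. *)
Record efun := mkEfun { edom : R -> Prop; eval : R -> R }.

Definition econcave (g : efun) : Prop :=
  forall x y t, edom g x -> edom g y -> 0 <= t <= 1 ->
    edom g (t * x + (1 - t) * y) /\
    t * eval g x + (1 - t) * eval g y <= eval g (t * x + (1 - t) * y).

Definition eincreasing (g : efun) : Prop :=
  forall x y, x <= y -> edom g x -> edom g y /\ eval g x <= eval g y.

Definition superdiff (g : efun) (x p : R) : Prop :=
  edom g x /\ forall y, edom g y -> eval g y <= eval g x + p * (y - x).

Definition is_lower_bound (E : R -> Prop) (m : R) : Prop :=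
  forall x, E x -> m <= x.
Definition is_glb (E : R -> Prop) (m : R) : Prop :=
  is_lower_bound E m /\ forall b, is_lower_bound E b -> b <= m.

(** g^dagger(p) = inf { x : p in superdiff g x }  (when this inf is finite). *)
Definition dagger (g : efun) (p : R) : R :=
  epsilon inhR (is_glb (fun x => superdiff g x p)).

Definition phi (t : R) : R := / sqrt (2 * PI) * exp (- (t * t) / 2).

Definition Phi_spec (x l : R) : Prop :=
  (forall a, a <= x -> inhabited (Riemann_integrable phi a x)) /\
  forall eps, eps > 0 -> exists A, forall a (pr : Riemann_integrable phi a x),
    a < A -> Rabs (RiemannInt pr - l) < eps.

Definition Phi (x : R) : R := epsilon inhR (Phi_spec x).
Definition PhiInv (y : R) : R := epsilon inhR (fun z => Phi z = y).

Definition Mpar (mu r sigma dt : R) : R := Rabs (mu - r) * sqrt dt / sigma.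
Definition Qfun (M x : R) : R := Phi (M + PhiInv x).
Definition qBS (M x : R) : R := epsilon inhR (fun l => derivable_pt_lim (Qfun M) x l).

Definition improper_int01 (h : R -> R) (I : R) : Prop :=
  (forall a b, 0 < a -> a <= b -> b < 1 -> inhabited (Riemann_integrable h a b)) /\
  forall eps, eps > 0 -> exists d, d > 0 /\
    forall a b (pr : Riemann_integrable h a b),
      0 < a < d -> 1 - d < b < 1 -> Rabs (RiemannInt pr - I) < eps.

Definition int01 (h : R -> R) : R := epsilon inhR (improper_int01 h).

Definition fEta (v : efun) (mu r sigma dt s : R) (C : nat) (eta x : R) : R :=
  dagger v (eta * powerRZ s (Z.of_nat C - 1) * exp (- r * dt)
               * qBS (Mpar mu r sigma dt) x).

Definition gammaEta (u v : efun) (mu r sigma dt s : R) (C : nat) (eta : R) : R :=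
  dagger u (- (eta / dt) *
    / (-1 + s * int01 (fun x => 1 + eval v (fEta v mu r sigma dt s C eta x)))).

Definition XEta (u v : efun) (mu r sigma dt s : R) (C : nat) (eta : R) : R :=
  gammaEta u v mu r sigma dt s C eta
  + s ^ C * int01 (fun x => exp (- r * dt) * qBS (Mpar mu r sigma dt) x
                            * fEta v mu r sigma dt s C eta x).

Definition lim_pinfty (F : R -> R) (l : R) : Prop :=
  forall eps, eps > 0 -> exists K, forall eta, eta > K -> Rabs (F eta - l) < eps.
Definition to_minfty_at_pinfty (F : R -> R) : Prop :=
  forall m, exists K, forall eta, eta > K -> F eta < m.

(* Main.v *)
From Coquelicot Require Import Coquelicot.
From Stdlib Require Import Reals Lra Lia ClassicalEpsilon Classical List.
Require Import Defs.
Open Scope R_scope.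


Definition gs (t : R) : R := exp (- (t * t)).
Definition GI (x : R) : R := RInt gs 0 x.
Definition Kf (t y : R) : R := exp (- (t * t) * (1 + y * y)) / (1 + y * y).
Definition KI (t : R) : R := RInt (Kf t) 0 1.
Definition HH (t : R) : R := GI t * GI t + KI t.

Lemma gs_cont x : continuous gs x.
Proof. apply (ex_derive_continuous (V:=R_NormedModule)); unfold gs; auto_derive; auto. Qed.

Lemma exc (f : R -> R) a b : (forall z, continuous f z) -> ex_RInt f a b.
Proof. intros; apply (ex_RInt_continuous (V:=R_CompleteNormedModule)); auto. Qed.

Lemma RIC (f : R -> R) a b c : ex_RInt f a b -> ex_RInt f b c -> RInt f a b + RInt f b c = RInt f a c.
Proof. intros. apply (RInt_Chasles (V:=R_CompleteNormedModule)); auto. Qed.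

Lemma RIswap (f : R -> R) a b : ex_RInt f a b -> RInt f b a = - RInt f a b.
Proof.
  intros. symmetry. apply (opp_RInt_swap (V:=R_CompleteNormedModule)); auto.
Qed.

Lemma gs_ex a b : ex_RInt gs a b.
Proof. apply exc; intros; apply gs_cont. Qed.

Lemma GI_derive x : is_derive GI x (gs x).
Proof.
  apply is_derive_RInt with (a := 0).
  - apply filter_forall; intro; apply (RInt_correct (V:=R_CompleteNormedModule)), gs_ex.
  - apply gs_cont.
Qed.

Lemma pos1yy y : 0 < 1 + y * y.
Proof. nra. Qed.

Lemma Kf_derive u y : is_derive (fun z => Kf z y) u (-2 * u * exp (- (u*u) * (1 + y*y))).
Proof.
  unfold Kf. auto_derive.
  - generalize (pos1yy y); lra.
  - field. generalize (pos1yy y); lra.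
Qed.

Lemma Kf_cont t y : continuous (Kf t) y.
Proof. apply (ex_derive_continuous (V:=R_NormedModule) (Kf t)); unfold Kf; auto_derive; generalize (pos1yy y); lra. Qed.

Lemma KI_derive t : is_derive KI t (-2 * gs t * GI t).
Proof.
  unfold KI.
  assert (H := is_derive_RInt_param Kf 0 1 t).
  replace (-2 * gs t * GI t) with (RInt (fun y => Derive (fun u => Kf u y) t) 0 1).
  - apply H.
    + apply filter_forall; intros x0 y _. eexists; apply Kf_derive.
    + intros y _.
      apply continuity_2d_pt_ext with (fun u v => -2 * u * exp (- (u*u) * (1 + v*v))).
      { intros; symmetry; apply is_derive_unique, Kf_derive. }
      apply continuity_2d_pt_mult.
      * apply continuity_2d_pt_mult. apply continuity_2d_pt_const. apply continuity_2d_pt_id1.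
      * apply continuity_1d_2d_pt_comp with (f := exp).
        { apply derivable_continuous_pt; apply derivable_pt_exp. }
        apply continuity_2d_pt_mult.
        { apply continuity_2d_pt_opp, continuity_2d_pt_mult; apply continuity_2d_pt_id1. }
        apply continuity_2d_pt_plus. apply continuity_2d_pt_const.
        apply continuity_2d_pt_mult; apply continuity_2d_pt_id2.
    + apply filter_forall; intros x0. apply exc; intros; apply Kf_cont.
  - rewrite (RInt_ext _ (fun y => scal (-2 * gs t) (scal t (gs (t * y + 0))))).
    + rewrite (RInt_scal (V:=R_CompleteNormedModule)).
      * rewrite (RInt_comp_lin (V:=R_CompleteNormedModule)). unfold GI, scal; simpl; unfold mult; simpl.
        rewrite Rmult_0_r, Rplus_0_r, Rmult_1_r, Rplus_0_r. reflexivity. apply gs_ex.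
      * apply exc. intros. apply (ex_derive_continuous (V:=R_NormedModule) (fun y => scal t (gs (t * y + 0)))).
        unfold gs, scal; simpl; unfold mult; simpl. auto_derive; auto.
    + intros y _. generalize (is_derive_unique _ _ _ (Kf_derive t y)); simpl; intros ->.
      unfold gs, scal; simpl; unfold mult; simpl.
      replace (- (t * t) * (1 + y * y)) with (- (t*t) + - ((t*y+0)*(t*y+0))) by ring.
      rewrite exp_plus. ring.
Qed.

Lemma HH_derive t : is_derive HH t 0.
Proof.
  unfold HH. replace 0 with (gs t * GI t + GI t * gs t + (-2 * gs t * GI t)) by ring.
  apply (is_derive_plus (K:=R_AbsRing) (V:=R_NormedModule)).
  apply (is_derive_mult (K:=R_AbsRing)); try apply GI_derive.
  intros; apply Rmult_comm. apply KI_derive.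
Qed.

Lemma HH_const t : HH t = HH 0.
Proof.
  destruct (MVT_gen HH 0 t (fun _ => 0)) as [c [_ Hc]].
  - intros; apply HH_derive.
  - intros. apply continuity_pt_filterlim. apply (ex_derive_continuous (V:=R_NormedModule)).
    eexists; apply HH_derive.
  - lra.
Qed.

Lemma KI0 : KI 0 = PI / 4.
Proof.
  unfold KI. rewrite <- atan_1.
  replace (atan 1) with (atan 1 - atan 0) by (rewrite atan_0; ring).
  apply is_RInt_unique.
  apply (is_RInt_derive (V:=R_CompleteNormedModule) atan).
  - intros x _. apply is_derive_Reals.
    replace (Kf 0 x) with (/ (1 + x^2)). apply derivable_pt_lim_atan.
    unfold Kf. replace (- (0*0) * (1 + x*x)) with 0 by ring. rewrite exp_0. simpl. field.
    generalize (pos1yy x); lra.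
  - intros; apply Kf_cont.
Qed.

Lemma GI0 : GI 0 = 0.
Proof. unfold GI. apply (RInt_point (V:=R_CompleteNormedModule)). Qed.

Lemma HH_val t : GI t * GI t + KI t = PI / 4.
Proof. change (HH t = PI/4). rewrite HH_const. unfold HH. rewrite GI0, KI0. ring. Qed.

Lemma KI_bounds t : 0 <= KI t <= gs t.
Proof.
  unfold KI. split.
  - apply RInt_ge_0. lra. apply exc; intros; apply Kf_cont.
    intros y _. unfold Kf. apply Rle_mult_inv_pos. apply Rlt_le, exp_pos. apply pos1yy.
  - replace (gs t) with (RInt (fun _ => gs t) 0 1).
    + apply RInt_le. lra. apply exc; intros; apply Kf_cont. apply ex_RInt_const.
      intros y Hy. unfold Kf, gs.
      assert (0 < exp (- (t * t) * (1 + y * y))) by apply exp_pos.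
      assert (exp (- (t * t) * (1 + y * y)) <= exp (- (t*t))).
      { destruct (Req_dec (t*t*(y*y)) 0) as [E|E].
        - right. f_equal. nra.
        - left. apply exp_increasing. assert (0 <= t*t*(y*y)) by (apply Rmult_le_pos; nra). nra. }
      unfold Rdiv. apply Rle_trans with (exp (- (t * t) * (1 + y * y)) * 1).
      apply Rmult_le_compat_l. lra. rewrite <- Rinv_1. apply Rinv_le_contravar. lra. nra.
      lra.
    + rewrite RInt_const. unfold scal; simpl; unfold mult; simpl. ring.
Qed.

Lemma GI_nonneg x : 0 <= x -> 0 <= GI x.
Proof. intros. apply RInt_ge_0; auto. apply gs_ex. intros; unfold gs; apply Rlt_le, exp_pos. Qed.

Lemma gs_small eps : 0 < eps -> exists K, forall x, x > K -> gs x < eps.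
Proof.
  intros He. exists (Rmax 1 (Rabs (ln eps))). intros x Hx.
  assert (H1 : 1 < x) by (eapply Rle_lt_trans; [apply Rmax_l| exact Hx]).
  assert (H2 : Rabs (ln eps) < x) by (eapply Rle_lt_trans; [apply Rmax_r| exact Hx]).
  unfold gs. rewrite <- (exp_ln eps) by auto. apply exp_increasing.
  generalize (Rle_abs (- ln eps)); rewrite Rabs_Ropp. nra.
Qed.

Lemma GI_lim eps : 0 < eps -> exists K, forall x, x > K -> Rabs (GI x - sqrt PI / 2) < eps.
Proof.
  intros He.
  assert (Hs : 0 < sqrt PI / 2) by (generalize (sqrt_lt_R0 PI PI_RGT_0); lra).
  destruct (gs_small (eps * (sqrt PI / 2))) as [K HK]. nra.
  exists (Rmax 0 K). intros x Hx.
  assert (x0 : 0 <= x) by (left; eapply Rle_lt_trans; [apply Rmax_l| exact Hx]).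
  assert (xK : x > K) by (eapply Rle_lt_trans; [apply Rmax_r| exact Hx]).
  generalize (HK x xK) (HH_val x) (KI_bounds x) (GI_nonneg x x0). intros h1 h2 h3 h4.
  assert (Esq : sqrt PI / 2 * (sqrt PI / 2) = PI / 4).
  { replace (PI/4) with (sqrt PI * sqrt PI / 4). field. rewrite sqrt_sqrt. field. generalize PI_RGT_0; lra. }
  assert (Hd: Rabs (GI x - sqrt PI / 2) * (GI x + sqrt PI / 2) < eps * (sqrt PI / 2)).
  { rewrite <- (Rabs_pos_eq (GI x + sqrt PI / 2)) by lra. rewrite <- Rabs_mult.
    replace ((GI x - sqrt PI / 2) * (GI x + sqrt PI / 2)) with (- KI x) by nra.
    rewrite Rabs_Ropp, Rabs_pos_eq by lra. lra. }
  assert (0 <= Rabs (GI x - sqrt PI / 2)) by apply Rabs_pos.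
  nra.
Qed.

Lemma sqrt2PI_pos : 0 < sqrt (2 * PI).
Proof. apply sqrt_lt_R0. generalize PI_RGT_0; lra. Qed.

Lemma phi_pos t : 0 < phi t.
Proof. unfold phi. apply Rmult_lt_0_compat. apply Rinv_0_lt_compat, sqrt2PI_pos. apply exp_pos. Qed.

Lemma phi_cont x : continuous phi x.
Proof. apply (ex_derive_continuous (V:=R_NormedModule)); unfold phi; auto_derive; auto. Qed.

Lemma phi_ex a b : ex_RInt phi a b.
Proof. apply exc; intros; apply phi_cont. Qed.

Lemma phi_even t : phi (- t) = phi t.
Proof. unfold phi. replace (- t * - t) with (t*t) by ring. reflexivity. Qed.

Definition P0 (x : R) : R := RInt phi 0 x.

Lemma P0_eq x : P0 x = GI (/ sqrt 2 * x) / sqrt PI.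
Proof.
  unfold P0, GI.
  assert (h2 : 0 < sqrt 2) by (apply sqrt_lt_R0; lra).
  assert (hP : 0 < sqrt PI) by (apply sqrt_lt_R0, PI_RGT_0).
  replace (/ sqrt 2 * x) with (/ sqrt 2 * x + 0) by ring.
  replace 0 with (/ sqrt 2 * 0 + 0) at 2 by ring.
  rewrite <- (RInt_comp_lin (V:=R_CompleteNormedModule)) by apply gs_ex.
  transitivity (RInt (fun y => scal (/ sqrt PI) (scal (/ sqrt 2) (gs (/ sqrt 2 * y + 0)))) 0 x).
  - apply RInt_ext. intros t _. unfold scal, phi, gs; simpl; unfold mult; simpl.
    replace (- ((/ sqrt 2 * t + 0) * (/ sqrt 2 * t + 0))) with (- (t*t)/2).
    + rewrite sqrt_mult by (generalize PI_RGT_0; lra). field. split; lra.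
    + replace ((/ sqrt 2 * t + 0) * (/ sqrt 2 * t + 0)) with (t * t / (sqrt 2 * sqrt 2)) by (field; lra).
      rewrite sqrt_sqrt by lra. field.
  - rewrite (RInt_scal (V:=R_CompleteNormedModule)).
    + unfold scal at 1; simpl; unfold mult; simpl. unfold Rdiv. apply Rmult_comm.
    + apply exc. intro. apply (ex_derive_continuous (V:=R_NormedModule) (fun y : R => scal (/ sqrt 2) (gs (/ sqrt 2 * y + 0)))).
      unfold scal, gs; simpl; unfold mult; simpl. auto_derive. auto.
Qed.

Lemma P0_odd x : P0 (- x) = - P0 x.
Proof.
  unfold P0.
  replace (- x) with (-1 * x + 0) by ring. replace 0 with (-1 * 0 + 0) at 1 by ring.
  rewrite <- (RInt_comp_lin (V:=R_CompleteNormedModule)) by apply phi_ex.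
  rewrite (RInt_ext _ (fun y => scal (-1) (phi y))).
  - rewrite (RInt_scal (V:=R_CompleteNormedModule)) by apply phi_ex.
    unfold scal; simpl; unfold mult; simpl. replace (-1*0+0) with 0 by ring. ring.
  - intros. replace (-1 * x0 + 0) with (- x0) by ring. rewrite phi_even. reflexivity.
Qed.

Lemma P0_lim eps : 0 < eps -> exists K, forall x, x > K -> Rabs (P0 x - / 2) < eps.
Proof.
  intros He.
  assert (h2 : 0 < sqrt 2) by (apply sqrt_lt_R0; lra).
  assert (hP : 0 < sqrt PI) by (apply sqrt_lt_R0, PI_RGT_0).
  destruct (GI_lim (eps * sqrt PI)) as [K HK]. nra.
  exists (sqrt 2 * K). intros x Hx.
  rewrite P0_eq.
  assert (H := HK (/ sqrt 2 * x)).
  replace (GI (/ sqrt 2 * x) / sqrt PI - / 2) with ((GI (/ sqrt 2 * x) - sqrt PI / 2) / sqrt PI) by (field; lra).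
  unfold Rdiv. rewrite Rabs_mult, (Rabs_pos_eq (/ sqrt PI)) by (left; apply Rinv_0_lt_compat; lra).
  apply Rmult_lt_reg_r with (sqrt PI). lra. rewrite Rmult_assoc, Rinv_l, Rmult_1_r by lra.
  apply H. apply Rmult_lt_reg_l with (sqrt 2). lra. rewrite <- Rmult_assoc, Rinv_r, Rmult_1_l by lra. lra.
Qed.

Lemma P0_lim_m eps : 0 < eps -> exists K, forall x, x < K -> Rabs (P0 x + / 2) < eps.
Proof.
  intros He. destruct (P0_lim eps He) as [K HK]. exists (- K). intros x Hx.
  replace (P0 x + /2) with (- (P0 (- x) - / 2)).
  rewrite Rabs_Ropp. apply HK. lra. rewrite P0_odd. ring.
Qed.

Lemma Phi_spec_uniq x l1 l2 : Phi_spec x l1 -> Phi_spec x l2 -> l1 = l2.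
Proof.
  intros [Hi H1] [_ H2].
  apply Rminus_diag_uniq. apply Rabs_eq_0. apply Rle_antisym. 2: apply Rabs_pos.
  apply Rnot_lt_le. intro Hp.
  destruct (H1 (Rabs (l1 - l2) / 2)) as [A1 HA1]. lra.
  destruct (H2 (Rabs (l1 - l2) / 2)) as [A2 HA2]. lra.
  set (a := Rmin (Rmin A1 A2) x - 1).
  assert (a <= x) by (unfold a; generalize (Rmin_r (Rmin A1 A2) x); lra).
  destruct (Hi a H) as [pr].
  assert (a < A1) by (unfold a; generalize (Rmin_l (Rmin A1 A2) x) (Rmin_l A1 A2); lra).
  assert (a < A2) by (unfold a; generalize (Rmin_l (Rmin A1 A2) x) (Rmin_r A1 A2); lra).
  generalize (HA1 a pr H0) (HA2 a pr H3). intros.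
  assert (Rabs (l1 - l2) <= Rabs (RiemannInt pr - l2) + Rabs (RiemannInt pr - l1)).
  { replace (l1 - l2) with ((RiemannInt pr - l2) - (RiemannInt pr - l1)) by ring.
    eapply Rle_trans. apply Rabs_triang. rewrite Rabs_Ropp. lra. }
  lra.
Qed.

Lemma Phi_spec_val x : Phi_spec x (/2 + P0 x).
Proof.
  split.
  - intros a _. constructor. apply ex_RInt_Reals_0, phi_ex.
  - intros eps He. destruct (P0_lim_m eps He) as [K HK]. exists K. intros a pr Ha.
    rewrite <- RInt_Reals.
    replace (RInt phi a x) with (P0 x - P0 a).
    + replace (P0 x - P0 a - (/ 2 + P0 x)) with (- (P0 a + / 2)) by ring.
      rewrite Rabs_Ropp. apply HK; lra.
    + unfold P0. rewrite <- (RIC phi a 0 x) by apply phi_ex.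
      rewrite (RIswap phi 0 a) by apply phi_ex. ring.
Qed.

Lemma Phi_val x : Phi x = /2 + P0 x.
Proof.
  unfold Phi. apply (Phi_spec_uniq x).
  - apply epsilon_spec. exists (/2 + P0 x). apply Phi_spec_val.
  - apply Phi_spec_val.
Qed.

Lemma Phi_derive x : is_derive Phi x (phi x).
Proof.
  apply is_derive_ext with (fun t => /2 + P0 t).
  { intros; rewrite Phi_val; reflexivity. }
  replace (phi x) with (0 + phi x) by ring.
  apply (is_derive_plus (K:=R_AbsRing) (V:=R_NormedModule)).
  apply (is_derive_const (K:=R_AbsRing) (V:=R_NormedModule)).
  apply is_derive_RInt with (a := 0).
  - apply filter_forall; intro; apply (RInt_correct (V:=R_CompleteNormedModule)), phi_ex.
  - apply phi_cont.
Qed.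

Lemma Phi_cpt x : continuity_pt Phi x.
Proof.
  apply continuity_pt_filterlim. apply (ex_derive_continuous (V:=R_NormedModule)).
  eexists; apply Phi_derive.
Qed.

Lemma Phi_incr x y : x < y -> Phi x < Phi y.
Proof.
  intros Hxy. destruct (MVT_gen Phi x y phi) as [c [_ Hc]].
  - intros; apply Phi_derive.
  - intros; apply Phi_cpt.
  - generalize (phi_pos c). nra.
Qed.

Lemma Phi_le x y : x <= y -> Phi x <= Phi y.
Proof. intros [H|H]. left; apply Phi_incr; auto. subst; right; auto. Qed.

Lemma Phi_lim eps : 0 < eps -> exists K, forall x, x > K -> 1 - eps < Phi x < 1 + eps.
Proof.
  intros He. destruct (P0_lim eps He) as [K HK]. exists K. intros x Hx.
  rewrite Phi_val. generalize (HK x Hx). intro H. apply Rabs_def2 in H. lra.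
Qed.

Lemma Phi_lim_m eps : 0 < eps -> exists K, forall x, x < K -> - eps < Phi x < eps.
Proof.
  intros He. destruct (P0_lim_m eps He) as [K HK]. exists K. intros x Hx.
  rewrite Phi_val. generalize (HK x Hx). intro H. apply Rabs_def2 in H. lra.
Qed.

Lemma Phi_lt1 x : Phi x < 1.
Proof.
  apply Rnot_le_lt. intro H.
  generalize (Phi_incr x (x+1)); intro Hi.
  destruct (Phi_lim (Phi (x+1) - Phi x)) as [K HK]. lra.
  set (y := Rmax K (x+1) + 1).
  generalize (HK y) (Phi_le (x+1) y) (Rmax_l K (x+1)) (Rmax_r K (x+1)). unfold y. intros. 
  assert (Hy1 : Rmax K (x + 1) + 1 > K) by lra.
  assert (Hy2 : x + 1 <= Rmax K (x + 1) + 1) by lra.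
  specialize (H0 Hy1). specialize (H1 Hy2). lra.
Qed.

Lemma Phi_gt0 x : 0 < Phi x.
Proof.
  apply Rnot_le_lt. intro H.
  generalize (Phi_incr (x-1) x); intro Hi.
  destruct (Phi_lim_m (Phi x - Phi (x-1))) as [K HK]. lra.
  set (y := Rmin K (x-1) - 1).
  generalize (HK y) (Phi_le y (x-1)) (Rmin_l K (x-1)) (Rmin_r K (x-1)). unfold y. intros. 
  assert (Hy1 : Rmin K (x - 1) - 1 < K) by lra.
  assert (Hy2 : Rmin K (x - 1) - 1 <= x - 1) by lra.
  specialize (H0 Hy1). specialize (H1 Hy2). lra.
Qed.

Lemma Phi_continuity : continuity Phi.
Proof. intro; apply Phi_cpt. Qed.

Lemma Phi_surj y : 0 < y < 1 -> exists z, Phi z = y.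
Proof.
  intros Hy.
  destruct (Phi_lim (1 - y)) as [K1 HK1]. lra.
  destruct (Phi_lim_m y) as [K2 HK2]. lra.
  set (b := K1 + 1). set (a := K2 - 1).
  assert (Hb : y < Phi b) by (generalize (HK1 b); unfold b; intros H; specialize (H ltac:(lra)); lra).
  assert (Ha : Phi a < y) by (generalize (HK2 a); unfold a; intros H; specialize (H ltac:(lra)); lra).
  destruct (IVT_gen Phi a b y Phi_continuity) as [z [_ Hz]].
  - split.
    + eapply Rle_trans. apply Rmin_l. lra.
    + eapply Rle_trans. 2: apply Rmax_r. lra.
  - exists z; auto.
Qed.

Lemma PhiInv_spec y : 0 < y < 1 -> Phi (PhiInv y) = y.
Proof.
  intros. unfold PhiInv. apply (epsilon_spec inhR (fun z => Phi z = y)). apply Phi_surj; auto.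
Qed.

Lemma Phi_inj x y : Phi x = Phi y -> x = y.
Proof.
  intros H. destruct (Rtotal_order x y) as [h|[h|h]]; auto.
  apply Phi_incr in h; lra. apply Phi_incr in h; lra.
Qed.

Lemma PhiInv_Phi z : PhiInv (Phi z) = z.
Proof. apply Phi_inj. apply PhiInv_spec. split. apply Phi_gt0. apply Phi_lt1. Qed.

Lemma PhiInv_incr y1 y2 : 0 < y1 -> y1 < y2 -> y2 < 1 -> PhiInv y1 < PhiInv y2.
Proof.
  intros. apply Rnot_le_lt. intro H2. apply Phi_le in H2.
  rewrite !PhiInv_spec in H2 by lra. lra.
Qed.

Lemma PhiInv_le y1 y2 : 0 < y1 -> y1 <= y2 -> y2 < 1 -> PhiInv y1 <= PhiInv y2.
Proof. intros h [H|H] h'. left; apply PhiInv_incr; auto. subst; right; auto. Qed.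

Lemma PhiInv_cont y : 0 < y < 1 -> continuity_pt PhiInv y.
Proof.
  intros Hy eps He. set (z := PhiInv y).
  assert (Hz : Phi z = y) by (apply PhiInv_spec; auto).
  generalize (Phi_incr z (z + eps)) (Phi_incr (z - eps) z). intros h1 h2.
  exists (Rmin (Phi (z+eps) - y) (y - Phi (z - eps))). split.
  - apply Rmin_glb_lt; lra.
  - intros y' [_ Hd]. simpl in *. unfold R_dist in *. fold z.
    generalize (Rmin_l (Phi (z+eps) - y) (y - Phi (z - eps))) (Rmin_r (Phi (z+eps) - y) (y - Phi (z - eps))).
    intros m1 m2. apply Rabs_def2 in Hd.
    assert (Hy' : 0 < y' < 1).
    { generalize (Phi_gt0 (z - eps)) (Phi_lt1 (z + eps)). lra. }
    apply Rabs_def1.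
    + apply Rnot_le_lt. intro H. 
      assert (H' : z + eps <= PhiInv y') by lra.
      apply Phi_le in H'. rewrite PhiInv_spec in H' by auto. lra.
    + apply Rnot_le_lt. intro H.
      assert (H' : PhiInv y' <= z - eps) by lra.
      apply Phi_le in H'. rewrite PhiInv_spec in H' by auto. lra.
Qed.

Lemma PhiInv_derive y : 0 < y < 1 -> derivable_pt_lim PhiInv y (/ phi (PhiInv y)).
Proof.
  intros Hy.
  assert (Prf : forall a, PhiInv (y/2) <= a <= PhiInv ((y+1)/2) -> derivable_pt Phi a).
  { intros a _. exists (phi a). apply is_derive_Reals, Phi_derive. }
  assert (Hi : PhiInv (y/2) <= PhiInv y <= PhiInv ((y+1)/2)).
  { split; apply PhiInv_le; lra. }
  generalize (Ranalysis5.derivable_pt_lim_recip_interv Phi PhiInv (y/2) ((y+1)/2) y Prf (PhiInv_cont y Hy)).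
  intro H.
  assert (Hd : derive_pt Phi (PhiInv y) (Prf (PhiInv y) Hi) = phi (PhiInv y)).
  { apply derive_pt_eq_0. apply is_derive_Reals, Phi_derive. }
  replace (/ phi (PhiInv y)) with (1 / derive_pt Phi (PhiInv y) (Prf (PhiInv y) Hi)).
  - apply H; try lra.
    + intros x0 Hx0. unfold comp, id. apply PhiInv_spec. lra.
    + rewrite Hd. generalize (phi_pos (PhiInv y)). lra.
  - rewrite Hd. unfold Rdiv. ring.
Qed.

Definition qv (M x : R) : R := exp (- (M * M) / 2 - M * PhiInv x).

Lemma phi_ratio M z : phi (M + z) * / phi z = exp (- (M * M) / 2 - M * z).
Proof.
  unfold phi. generalize sqrt2PI_pos; intro.
  assert (exp (- (z * z) / 2) <> 0) by (apply Rgt_not_eq, exp_pos).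
  replace (- ((M + z) * (M + z)) / 2) with ((- (M * M) / 2 - M * z) + - (z*z)/2) by field.
  rewrite exp_plus. field. split; lra.
Qed.

Lemma Q_derive M x : 0 < x < 1 -> derivable_pt_lim (Qfun M) x (qv M x).
Proof.
  intros Hx. unfold qv. rewrite <- phi_ratio.
  apply (derivable_pt_lim_comp (fun t => M + PhiInv t) Phi).
  - replace (/ phi (PhiInv x)) with (0 + / phi (PhiInv x)) by ring.
    apply derivable_pt_lim_plus. apply derivable_pt_lim_const. apply PhiInv_derive; auto.
  - apply is_derive_Reals, Phi_derive.
Qed.

Lemma qBS_eq M x : 0 < x < 1 -> qBS M x = qv M x.
Proof.
  intros Hx. unfold qBS. apply (uniqueness_limite (Qfun M) x).
  - apply (epsilon_spec inhR (fun l => derivable_pt_lim (Qfun M) x l)). exists (qv M x). apply Q_derive; auto.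
  - apply Q_derive; auto.
Qed.

Lemma qv_pos M x : 0 < qv M x.
Proof. apply exp_pos. Qed.

Lemma qv_noninc M x y : 0 <= M -> 0 < x -> x <= y -> y < 1 -> qv M y <= qv M x.
Proof.
  intros. unfold qv. generalize (PhiInv_le x y H0 H1 H2). intro.
  destruct (Rle_lt_or_eq_dec _ _ H3) as [h|h].
  - destruct (Rle_lt_or_eq_dec _ _ H) as [hm|hm].
    + left. apply exp_increasing. nra.
    + rewrite <- hm. right. f_equal. ring.
  - rewrite h. right; auto.
Qed.

Lemma qv_cont M x : 0 < x < 1 -> continuous (qv M) x.
Proof.
  intros Hx. apply continuity_pt_filterlim. unfold qv.
  apply (continuity_pt_comp (fun t => - (M * M) / 2 - M * PhiInv t) exp).
  - apply continuity_pt_minus. apply continuity_pt_const. intros a b; auto.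
    apply continuity_pt_mult. apply continuity_pt_const. intros a b; auto. apply PhiInv_cont; auto.
  - apply derivable_continuous_pt. apply derivable_pt_exp.
Qed.

Lemma Qfun_bounds M x : 0 < Qfun M x < 1.
Proof. unfold Qfun. split. apply Phi_gt0. apply Phi_lt1. Qed.

Lemma q_RInt M a b : 0 < a -> a <= b -> b < 1 -> is_RInt (qv M) a b (Qfun M b - Qfun M a).
Proof.
  intros. apply (is_RInt_derive (V:=R_CompleteNormedModule) (Qfun M) (qv M)).
  - intros x Hx. rewrite Rmin_left, Rmax_right in Hx by lra. apply is_derive_Reals, Q_derive. lra.
  - intros x Hx. rewrite Rmin_left, Rmax_right in Hx by lra. apply qv_cont. lra.
Qed.

Lemma Q_lim0 M eps : 0 < eps -> exists d, 0 < d < 1 /\ forall a, 0 < a < d -> Qfun M a < eps.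
Proof.
  intros He. destruct (Phi_lim_m eps He) as [K HK].
  exists (Phi (K - M)). split. split. apply Phi_gt0. apply Phi_lt1.
  intros a Ha. unfold Qfun. apply HK.
  assert (PhiInv a < PhiInv (Phi (K - M))).
  { apply PhiInv_incr; try lra. apply Phi_lt1. }
  rewrite PhiInv_Phi in H. lra.
Qed.

Lemma Q_lim1 M eps : 0 < eps -> exists d, 0 < d < 1 /\ forall b, 1 - d < b < 1 -> 1 - eps < Qfun M b.
Proof.
  intros He. destruct (Phi_lim eps He) as [K HK].
  exists (1 - Phi (K - M)). split. split. generalize (Phi_lt1 (K - M)); lra. generalize (Phi_gt0 (K-M)); lra.
  intros b Hb. unfold Qfun. apply HK.
  assert (PhiInv (Phi (K - M)) < PhiInv b).
  { apply PhiInv_incr; try lra. apply Phi_gt0. }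
  rewrite PhiInv_Phi in H. lra.
Qed.

Lemma glb_uniq E m1 m2 : is_glb E m1 -> is_glb E m2 -> m1 = m2.
Proof. intros [h1 h2] [h3 h4]. apply Rle_antisym; auto. Qed.

Lemma dagger_eq g p m : is_glb (fun x => superdiff g x p) m -> dagger g p = m.
Proof.
  intros H. unfold dagger. apply (glb_uniq (fun x => superdiff g x p)); auto.
  apply (epsilon_spec inhR (is_glb (fun x => superdiff g x p))). exists m; auto.
Qed.

Lemma glb_exists (E : R -> Prop) b x0 : (forall x, E x -> b <= x) -> E x0 -> exists m, is_glb E m.
Proof.
  intros Hb Hx.
  destruct (completeness (fun x => E (- x))) as [m [Hm1 Hm2]].
  - exists (- b). intros x Hx'. apply Hb in Hx'. lra.
  - exists (- x0). rewrite Ropp_involutive. auto.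
  - exists (- m). split.
    + intros x Ex. assert (x <= - m -> False -> True) by auto.
      assert (H1 : - x <= m). { apply Hm1. rewrite Ropp_involutive; auto. } lra.
    + intros c Hc. assert (m <= - c). { apply Hm2. intros x Ex. apply Hc in Ex. lra. } lra.
Qed.

Lemma glb_nonempty E m : is_glb E m -> exists x, E x.
Proof.
  intros [h1 h2]. apply NNPP. intro Hn. assert (m + 1 <= m).
  { apply h2. intros x Ex. exfalso. apply Hn. exists x; auto. } lra.
Qed.

Lemma sd_mono (g : efun) p p' w z : p < p' -> superdiff g w p' -> superdiff g z p -> w <= z.
Proof.
  intros Hp [Dw Hw] [Dz Hz]. specialize (Hw z Dz). specialize (Hz w Dw). nra.
Qed.

Lemma glb_le_elem E m x : is_glb E m -> E x -> m <= x.
Proof. intros [h _] Ex. auto. Qed.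

Lemma dagger_mono (g : efun) p p' m m' : p < p' ->
  is_glb (fun x => superdiff g x p) m -> is_glb (fun x => superdiff g x p') m' -> m' <= m.
Proof.
  intros Hp Hm Hm'. destruct (glb_nonempty _ _ Hm') as [w Hw].
  apply Rle_trans with w. eapply glb_le_elem; eauto.
  destruct Hm as [_ H2]. apply H2. intros z Hz. eapply sd_mono; eauto.
Qed.

Definition vgood (N : nat) (xs : nat -> R) (vf : R -> R) : Prop :=
  (1 <= N)%nat /\ (forall i, (1 <= i)%nat -> (i < N)%nat -> xs i < xs (S i)) /\
  (forall i, (1 <= i)%nat -> (i < N)%nat -> forall x, xs i <= x <= xs (S i) ->
     vf x = vf (xs i) + (vf (xs (S i)) - vf (xs i)) / (xs (S i) - xs i) * (x - xs i)) /\
  (forall x, xs N <= x -> vf x = vf (xs N)).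

Definition vE (xs : nat -> R) (vf : R -> R) := mkEfun (fun x => xs 1%nat <= x) vf.

Lemma grid_le N xs vf i j : vgood N xs vf -> (1 <= i)%nat -> (i <= j)%nat -> (j <= N)%nat -> xs i <= xs j.
Proof.
  intros [_ [Hg _]] Hi Hij. induction j as [|j IH]; intros Hj.
  - lia.
  - destruct (Nat.eq_dec i (S j)). subst; lra.
    assert (xs j < xs (S j)) by (apply Hg; lia). specialize (IH ltac:(lia) ltac:(lia)). lra.
Qed.

Lemma cover N xs vf y : vgood N xs vf -> xs 1%nat <= y ->
  xs N <= y \/ exists i, (1 <= i)%nat /\ (i < N)%nat /\ xs i <= y <= xs (S i).
Proof.
  intros HV Hy. destruct HV as [HN _].
  assert (forall n, (1 <= n)%nat -> (n <= N)%nat ->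
    xs n <= y \/ exists i, (1 <= i)%nat /\ (i < n)%nat /\ xs i <= y <= xs (S i)).
  { induction n as [|n IH]; intros h1 h2. lia.
    destruct (Nat.eq_dec n 0). subst. left; auto.
    destruct (IH ltac:(lia) ltac:(lia)) as [h|[i [? [? ?]]]].
    - destruct (Rle_dec (xs (S n)) y). left; auto. right. exists n. repeat split; try lia; lra.
    - right. exists i. repeat split; try lia; lra. }
  destruct (H N HN (le_n N)) as [h|[i [? [? ?]]]]. left; auto. right; exists i; auto.
Qed.

Lemma argmax_fin (F : nat -> R) n : (1 <= n)%nat ->
  exists k, (1 <= k <= n)%nat /\ forall i, (1 <= i <= n)%nat -> F i <= F k.
Proof.
  induction n as [|n IH]; intros Hn. lia.
  destruct (Nat.eq_dec n 0). subst. exists 1%nat. split. lia. intros. assert (i = 1%nat) by lia. subst; lra.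
  destruct (IH ltac:(lia)) as [k [Hk HF]].
  destruct (Rle_dec (F k) (F (S n))).
  - exists (S n). split. lia. intros i Hi. destruct (Nat.eq_dec i (S n)). subst; lra.
    specialize (HF i ltac:(lia)). lra.
  - exists k. split. lia. intros i Hi. destruct (Nat.eq_dec i (S n)). subst; lra. apply HF; lia.
Qed.

Lemma seg_comb N xs vf p i y : vgood N xs vf -> (1 <= i)%nat -> (i < N)%nat -> xs i <= y <= xs (S i) ->
  0 <= (y - xs i) / (xs (S i) - xs i) <= 1 /\ vf y - p * y = (1 - (y - xs i) / (xs (S i) - xs i)) * (vf (xs i) - p * xs i) + (y - xs i) / (xs (S i) - xs i) * (vf (xs (S i)) - p * xs (S i)).
Proof.
  intros HV Hi HiN Hy. set (t := (y - xs i) / (xs (S i) - xs i)).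
  destruct HV as [_ [Hg [Hl _]]]. assert (Hd : xs i < xs (S i)) by auto.
  split.
  - unfold t. split. apply Rle_mult_inv_pos; lra.
    apply Rmult_le_reg_r with (xs (S i) - xs i). lra. unfold Rdiv. rewrite Rmult_assoc, Rinv_l; lra.
  - unfold t. rewrite (Hl i Hi HiN y Hy). rewrite (Hl i Hi HiN (xs (S i))) by lra.
    field. lra.
Qed.

Lemma sd_v_iff xs vf x p : superdiff (vE xs vf) x p <->
  (xs 1%nat <= x /\ forall y, xs 1%nat <= y -> vf y - p * y <= vf x - p * x).
Proof.
  unfold superdiff, vE; simpl. split.
  - intros [h1 h2]. split; auto. intros y hy. specialize (h2 y hy). lra.
  - intros [h1 h2]. split; auto. intros y hy. specialize (h2 y hy). lra.
Qed.

Lemma vd_main N xs vf p : vgood N xs vf -> 0 < p ->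
  exists g, is_glb (fun x => superdiff (vE xs vf) x p) g /\ exists i, (1 <= i <= N)%nat /\ g = xs i.
Proof.
  intros HV Hp. pose proof HV as HV'. destruct HV' as [HN [Hg [Hl Hc]]].
  set (h := fun x => vf x - p * x).
  destruct (argmax_fin (fun i => h (xs i)) N HN) as [k [Hk HF]].
  assert (Hmax : forall y, xs 1%nat <= y -> h y <= h (xs k)).
  { intros y Hy. destruct (cover N xs vf y HV Hy) as [H|[i [h1 [h2 h3]]]].
    - apply Rle_trans with (h (xs N)). unfold h. rewrite (Hc y H). nra.
      apply HF. lia.
    - destruct (seg_comb N xs vf p i y HV h1 h2 h3) as [Ht Heq]. unfold h; rewrite Heq.
      generalize (HF i ltac:(lia)) (HF (S i) ltac:(lia)). unfold h. nra. }
  assert (Sk : superdiff (vE xs vf) (xs k) p).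
  { apply sd_v_iff. split. apply (grid_le N xs vf); [exact HV|lia|lia|lia]. exact Hmax. }
  destruct (glb_exists (fun x => superdiff (vE xs vf) x p) (xs 1%nat) (xs k)) as [g Hgl]; auto.
  { intros x Hx. apply sd_v_iff in Hx. tauto. }
  exists g. split; auto.
  assert (Hg1 : xs 1%nat <= g).
  { destruct Hgl as [_ H2]. apply H2. intros x Hx. apply sd_v_iff in Hx. tauto. }
  assert (HgN : g <= xs N).
  { apply Rle_trans with (xs k). eapply glb_le_elem; eauto. apply (grid_le N xs vf); [exact HV|lia|lia|lia]. }
  destruct (cover N xs vf g HV Hg1) as [H|[i [h1 [h2 h3]]]].
  - exists N. split. lia. lra.
  - destruct (Req_dec g (xs i)) as [E|E]. exists i. split. lia. auto.
    destruct (Req_dec g (xs (S i))) as [E'|E']. exists (S i). split. lia. auto.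
    exfalso.
    assert (Hy : exists y, superdiff (vE xs vf) y p /\ y < xs (S i)).
    { apply NNPP. intro Hn. destruct Hgl as [_ H2].
      assert (xs (S i) <= g).
      { apply H2. intros x Hx. apply Rnot_lt_le. intro. apply Hn. exists x; auto. }
      lra. }
    destruct Hy as [y [Sy Hy]].
    assert (Hgy : g <= y) by (eapply glb_le_elem; eauto).
    apply sd_v_iff in Sy. destruct Sy as [Sy1 Sy2].
    destruct (seg_comb N xs vf p i y HV h1 h2 ltac:(lra)) as [Ht Heq].
    set (t := (y - xs i) / (xs (S i) - xs i)) in *.
    change (h y = (1 - t) * h (xs i) + t * h (xs (S i))) in Heq.
    assert (Hd : xs i < xs (S i)) by auto.
    assert (Htp : 0 < t).
    { unfold t. apply Rmult_lt_0_compat. lra. apply Rinv_0_lt_compat; lra. }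
    assert (Ht1 : t < 1).
    { unfold t. apply Rmult_lt_reg_r with (xs (S i) - xs i). lra. unfold Rdiv. rewrite Rmult_assoc, Rinv_l; lra. }
    assert (Hxi : xs 1%nat <= xs i) by (apply (grid_le N xs vf); [exact HV|lia|lia|lia]).
    assert (hi : h (xs i) <= h y) by (apply Sy2; lra).
    assert (hSi : h (xs (S i)) <= h y) by (apply Sy2; apply Rle_trans with (xs i); lra).
    assert (hh : h (xs i) = h y) by nra.
    assert (Sxi : superdiff (vE xs vf) (xs i) p).
    { apply sd_v_iff. split. auto. intros z Hz. change (h z <= h (xs i)). rewrite hh. apply Sy2; auto. }
    assert (g <= xs i) by (eapply glb_le_elem; eauto). lra.
Qed.

Lemma vd_val N xs vf p : vgood N xs vf -> 0 < p ->
  exists i, (1 <= i <= N)%nat /\ dagger (vE xs vf) p = xs i.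
Proof.
  intros HV Hp. destruct (vd_main N xs vf p HV Hp) as [g [Hg [i [Hi E]]]].
  exists i. split; auto. rewrite (dagger_eq _ _ _ Hg). auto.
Qed.

Lemma vd_range N xs vf p : vgood N xs vf -> 0 < p ->
  xs 1%nat <= dagger (vE xs vf) p <= xs N.
Proof.
  intros HV Hp. destruct (vd_val N xs vf p HV Hp) as [i [Hi ->]].
  split; apply (grid_le N xs vf); auto; lia.
Qed.

Lemma vd_mono N xs vf p p' : vgood N xs vf -> 0 < p -> p <= p' ->
  dagger (vE xs vf) p' <= dagger (vE xs vf) p.
Proof.
  intros HV Hp [Hpp|Hpp]. 2:{ subst; right; auto. }
  destruct (vd_main N xs vf p HV Hp) as [g [Hg _]].
  destruct (vd_main N xs vf p' HV ltac:(lra)) as [g' [Hg' _]].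
  rewrite (dagger_eq _ _ _ Hg), (dagger_eq _ _ _ Hg').
  eapply dagger_mono; eauto.
Qed.

Lemma vd_big N xs vf : vgood N xs vf -> (forall x, xs 1%nat <= x -> vf x <= 0) ->
  exists P, 0 < P /\ forall p, P <= p -> dagger (vE xs vf) p = xs 1%nat.
Proof.
  intros HV Hneg. pose proof HV as HV'. destruct HV' as [HN [Hg [Hl Hc]]].
  destruct (Nat.eq_dec N 1) as [E|E].
  - exists 1. split. lra. intros p Hp. apply dagger_eq. split.
    + intros x Hx. destruct Hx as [h _]. exact h.
    + intros b Hb. apply Hb. split. simpl; lra. intros y Hy. simpl in *.
      subst N. rewrite (Hc y Hy). nra.
  - assert (H12 : xs 1%nat < xs 2%nat) by (apply Hg; lia).
    set (s1 := (vf (xs 2%nat) - vf (xs 1%nat)) / (xs 2%nat - xs 1%nat)).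
    set (s2 := - vf (xs 1%nat) / (xs 2%nat - xs 1%nat)).
    exists (Rmax 1 (Rmax s1 s2)). split. eapply Rlt_le_trans. 2: apply Rmax_l. lra.
    intros p Hp.
    assert (p1 : s1 <= p) by (eapply Rle_trans; [apply Rmax_l|]; eapply Rle_trans; [apply Rmax_r|exact Hp]).
    assert (p2 : s2 <= p) by (eapply Rle_trans; [apply Rmax_r|]; eapply Rle_trans; [apply Rmax_r|exact Hp]).
    apply dagger_eq. split.
    + intros x Hx. destruct Hx as [h _]. exact h.
    + intros b Hb. apply Hb. split. simpl; lra. intros y Hy. simpl in *.
      destruct (Rle_dec y (xs 2%nat)).
      * rewrite (Hl 1%nat ltac:(lia) ltac:(lia) y ltac:(lra)). fold s1. nra.
      * assert (vf y <= 0) by (apply Hneg; lra).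
        assert (s2 * (xs 2%nat - xs 1%nat) = - vf (xs 1%nat)) by (unfold s2; field; lra).
        assert (p1' : 1 <= p) by (eapply Rle_trans; [apply Rmax_l|exact Hp]).
        assert (p * (xs 2%nat - xs 1%nat) <= p * (y - xs 1%nat)) by (apply Rmult_le_compat_l; lra).
        assert (s2 * (xs 2%nat - xs 1%nat) <= p * (xs 2%nat - xs 1%nat)) by (apply Rmult_le_compat_r; lra).
        lra.
Qed.

Lemma ud_lower (u : efun) p gmin : (exists g, is_glb (fun x => superdiff u x p) g) ->
  is_glb (edom u) gmin -> gmin <= dagger u p.
Proof.
  intros [g Hg] [Hm _]. rewrite (dagger_eq _ _ _ Hg). destruct Hg as [_ H2]. apply H2.
  intros x [Dx _]. auto.
Qed.

Lemma ud_upper (u : efun) T x0 : eincreasing u ->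
  (forall p, p > 0 -> exists g, is_glb (fun x => superdiff u x p) g) ->
  edom u x0 -> x0 < T -> exists P, forall p, p >= P -> dagger u p < T.
Proof.
  intros Hinc Hglb Dx0 HT.
  destruct (Hglb 1 ltac:(lra)) as [g1 Hg1]. destruct (glb_nonempty _ _ Hg1) as [z1 Hz1].
  exists (Rmax 2 ((eval u z1 - eval u x0) / (T - x0) + 1)). intros p Hp.
  generalize (Rmax_l 2 ((eval u z1 - eval u x0) / (T - x0) + 1)) (Rmax_r 2 ((eval u z1 - eval u x0) / (T - x0) + 1)).
  intros m1 m2.
  assert (p2 : 2 <= p) by lra.
  assert (p3 : (eval u z1 - eval u x0) / (T - x0) + 1 <= p) by lra.
  destruct (Hglb p ltac:(lra)) as [g Hg]. rewrite (dagger_eq _ _ _ Hg).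
  destruct (glb_nonempty _ _ Hg) as [z Hz].
  destruct (Rlt_dec z T) as [h|h].
  - apply Rle_lt_trans with z. eapply glb_le_elem; eauto. exact h.
  - exfalso.
    assert (Hzz : z <= z1) by (eapply sd_mono with (p := 1) (p' := p); eauto; lra).
    pose proof Hz as [Dz Hz']. destruct Hz1 as [Dz1 _].
    destruct (Hinc z z1 Hzz Dz) as [_ Hu].
    specialize (Hz' x0 Dx0).
    assert (p * (T - x0) <= eval u z1 - eval u x0) by nra.
    assert ((eval u z1 - eval u x0) / (T - x0) * (T - x0) = eval u z1 - eval u x0) by (field; lra).
    nra.
Qed.

Lemma ex_RInt_ext_R (f g : R -> R) a b : (forall x, Rmin a b < x < Rmax a b -> f x = g x) -> ex_RInt f a b -> ex_RInt g a b.
Proof. intros. apply (ex_RInt_ext (V:=R_NormedModule) f g); auto. Qed.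

Lemma ex_RInt_Chasles_R (f : R -> R) a b c : ex_RInt f a b -> ex_RInt f b c -> ex_RInt f a c.
Proof. intros. apply (ex_RInt_Chasles (V:=R_NormedModule) f a b c); auto. Qed.

Lemma pc_int (S : list R) : forall (h F g : R -> R) a b, a <= b ->
  (forall x, a <= x <= b -> continuous h x) ->
  (forall x y, a < x -> x <= y -> y < b -> g x <= g y) ->
  (forall x, a < x < b -> In (g x) S) ->
  ex_RInt (fun x => h x * F (g x)) a b.
Proof.
  induction S as [|s S IH]; intros h F g a b Hab Hh Hg HS.
  - destruct (Req_dec a b) as [E|E]. subst. apply (ex_RInt_point (V:=R_NormedModule)).
    exfalso. apply (HS ((a+b)/2)). lra.
  - destruct (classic (exists x, a < x < b /\ g x = s)) as [[x0 [Hx0 Hgx0]]|Hne].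
    2:{ apply IH; auto. intros x Hx. destruct (HS x Hx); auto. exfalso; apply Hne. exists x; auto. }
    set (A := fun x => a < x < b /\ g x = s).
    destruct (glb_exists A a x0) as [c1 Hc1]. { intros x [Hx _]; lra. } { split; auto. }
    destruct (glb_exists (fun x => A (- x)) (- b) (- x0)) as [m2 Hm2].
    { intros x [Hx _]; lra. } { red. rewrite Ropp_involutive. split; auto. }
    set (c2 := - m2).
    assert (Hc2 : forall x, A x -> x <= c2).
    { intros x Ax. unfold c2. assert (m2 <= - x). apply (glb_le_elem _ _ _ Hm2). red. rewrite Ropp_involutive; auto. lra. }
    assert (Hc2' : forall y, (forall x, A x -> x <= y) -> c2 <= y).
    { intros y Hy. unfold c2. destruct Hm2 as [_ H2]. assert (- y <= m2). apply H2. intros x Ax. apply Hy in Ax. lra. lra. }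
    assert (Hc1a : a <= c1). { destruct Hc1 as [_ H2]. apply H2. intros x [Hx _]; lra. }
    assert (Hc1x : c1 <= x0). { apply (glb_le_elem _ _ _ Hc1). split; auto. }
    assert (Hc2x : x0 <= c2). { apply Hc2. split; auto. }
    assert (Hc2b : c2 <= b). { apply Hc2'. intros x [Hx _]; lra. }
    assert (L : forall x, a < x < c1 -> In (g x) S).
    { intros x Hx. destruct (HS x ltac:(lra)) as [E|E]; auto. exfalso.
      assert (c1 <= x) by (apply (glb_le_elem _ _ _ Hc1); split; auto; lra). lra. }
    assert (Rr : forall x, c2 < x < b -> In (g x) S).
    { intros x Hx. destruct (HS x ltac:(lra)) as [E|E]; auto. exfalso.
      assert (x <= c2) by (apply Hc2; split; auto; lra). lra. }
    assert (Mid : forall x, c1 < x < c2 -> g x = s).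
    { intros x Hx.
      assert (E1 : exists t1, A t1 /\ t1 <= x).
      { apply NNPP; intro Hn. assert (x <= c1). { destruct Hc1 as [_ H2]. apply H2. intros t At.
          apply Rnot_lt_le. intro. apply Hn. exists t; split; auto; lra. } lra. }
      assert (E2 : exists t2, A t2 /\ x <= t2).
      { apply NNPP; intro Hn. assert (c2 <= x). { apply Hc2'. intros t At.
          apply Rnot_lt_le. intro. apply Hn. exists t; split; auto; lra. } lra. }
      destruct E1 as [t1 [[Ht1 Gt1] Ht1x]]. destruct E2 as [t2 [[Ht2 Gt2] Ht2x]].
      generalize (Hg t1 x ltac:(lra) Ht1x ltac:(lra)) (Hg x t2 ltac:(lra) Ht2x ltac:(lra)). lra. }
    apply ex_RInt_Chasles_R with c1.
    { apply IH; auto. intros; apply Hh; lra. intros; apply Hg; lra. }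
    apply ex_RInt_Chasles_R with c2.
    + apply ex_RInt_ext_R with (fun x => h x * F s).
      * intros x Hx. rewrite Rmin_left, Rmax_right in Hx by lra. rewrite Mid; auto.
      * apply (ex_RInt_continuous (V:=R_CompleteNormedModule)). intros z Hz.
        rewrite Rmin_left, Rmax_right in Hz by lra.
        apply (continuous_mult (K:=R_AbsRing)). apply Hh; lra. apply continuous_const.
    + apply IH; auto. intros; apply Hh; lra. intros; apply Hg; lra.
Qed.

Lemma int01_uniq h I J : improper_int01 h I -> improper_int01 h J -> I = J.
Proof.
  intros [Hi H1] [_ H2].
  apply Rminus_diag_uniq. apply Rabs_eq_0. apply Rle_antisym. 2: apply Rabs_pos.
  apply Rnot_lt_le. intro Hp.
  destruct (H1 (Rabs (I - J) / 2)) as [d1 [Hd1 HA1]]. lra.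
  destruct (H2 (Rabs (I - J) / 2)) as [d2 [Hd2 HA2]]. lra.
  set (d := Rmin (Rmin d1 d2) (1/2)).
  assert (0 < d) by (unfold d; repeat apply Rmin_glb_lt; lra).
  assert (d <= d1 /\ d <= d2 /\ d <= 1/2).
  { unfold d. generalize (Rmin_l (Rmin d1 d2) (1/2)) (Rmin_r (Rmin d1 d2) (1/2)) (Rmin_l d1 d2) (Rmin_r d1 d2). lra. }
  destruct (Hi (d/2) (1 - d/2) ltac:(lra) ltac:(lra) ltac:(lra)) as [pr].
  generalize (HA1 (d/2) (1-d/2) pr ltac:(lra) ltac:(lra)) (HA2 (d/2) (1-d/2) pr ltac:(lra) ltac:(lra)). intros.
  assert (Rabs (I - J) <= Rabs (RiemannInt pr - J) + Rabs (RiemannInt pr - I)).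
  { replace (I - J) with ((RiemannInt pr - J) - (RiemannInt pr - I)) by ring.
    eapply Rle_trans. apply Rabs_triang. rewrite Rabs_Ropp. lra. }
  lra.
Qed.

Lemma int01_eq h I : improper_int01 h I -> int01 h = I.
Proof.
  intros H. unfold int01. apply (int01_uniq h). apply (epsilon_spec inhR (improper_int01 h)). exists I; auto. auto.
Qed.

Lemma imp_of_RInt (h : R -> R) I :
  (forall a b, 0 < a -> a <= b -> b < 1 -> ex_RInt h a b) ->
  (forall eps, eps > 0 -> exists d, d > 0 /\ forall a b, 0 < a < d -> 1 - d < b < 1 -> Rabs (RInt h a b - I) < eps) ->
  improper_int01 h I.
Proof.
  intros Hex Hlim. split.
  - intros. constructor. apply ex_RInt_Reals_0. auto.
  - intros eps He. destruct (Hlim eps He) as [d [Hd H]]. exists d. split; auto.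
    intros a b pr Ha Hb. rewrite <- RInt_Reals. auto.
Qed.

Lemma RInt_of_imp (h : R -> R) I : improper_int01 h I ->
  (forall a b, 0 < a -> a <= b -> b < 1 -> ex_RInt h a b) /\
  (forall eps, eps > 0 -> exists d, d > 0 /\ forall a b, 0 < a < d -> 1 - d < b < 1 -> Rabs (RInt h a b - I) < eps).
Proof.
  intros [Hi Hl]. split.
  - intros a b ? ? ?. destruct (Hi a b) as [pr]; auto. apply ex_RInt_Reals_1; auto.
  - intros eps He. destruct (Hl eps He) as [d [Hd H]]. exists (Rmin d (1/2)). split.
    apply Rmin_glb_lt; lra.
    intros a b Ha Hb. generalize (Rmin_l d (1/2)) (Rmin_r d (1/2)). intros m1 m2.
    destruct (Hi a b) as [pr]; try lra. rewrite (RInt_Reals h a b pr). apply H; lra.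
Qed.

Lemma imp_ext (f g : R -> R) I : (forall x, 0 < x < 1 -> f x = g x) -> improper_int01 f I -> improper_int01 g I.
Proof.
  intros Hfg Hf. destruct (RInt_of_imp f I Hf) as [Hex Hl]. apply imp_of_RInt.
  - intros. apply ex_RInt_ext_R with f; auto. intros x Hx. rewrite Rmin_left, Rmax_right in Hx by lra. apply Hfg; lra.
  - intros eps He. destruct (Hl eps He) as [d [Hd H]]. exists (Rmin d (1/2)). split. apply Rmin_glb_lt; lra.
    intros a b Ha Hb. generalize (Rmin_l d (1/2)) (Rmin_r d (1/2)). intros m1 m2.
    rewrite <- (RInt_ext f g). apply H; lra.
    intros x Hx. rewrite Rmin_left, Rmax_right in Hx by lra. apply Hfg; lra.
Qed.

Lemma imp_plus (f g : R -> R) I J : improper_int01 f I -> improper_int01 g J -> improper_int01 (fun x => f x + g x) (I + J).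
Proof.
  intros Hf Hg. destruct (RInt_of_imp f I Hf) as [Hex1 Hl1]. destruct (RInt_of_imp g J Hg) as [Hex2 Hl2].
  apply imp_of_RInt.
  - intros. apply (ex_RInt_plus (V:=R_NormedModule) f g); auto.
  - intros eps He. destruct (Hl1 (eps/2)) as [d1 [Hd1 H1]]. lra. destruct (Hl2 (eps/2)) as [d2 [Hd2 H2]]. lra.
    exists (Rmin (Rmin d1 d2) (1/2)). split. repeat apply Rmin_glb_lt; lra.
    intros a b Ha Hb.
    generalize (Rmin_l (Rmin d1 d2) (1/2)) (Rmin_r (Rmin d1 d2) (1/2)) (Rmin_l d1 d2) (Rmin_r d1 d2). intros m1 m2 m3 m4.
    rewrite (RInt_plus (V:=R_CompleteNormedModule) f g) by (apply Hex1 || apply Hex2; lra).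
    unfold plus; simpl.
    generalize (H1 a b ltac:(lra) ltac:(lra)) (H2 a b ltac:(lra) ltac:(lra)). intros.
    replace (RInt f a b + RInt g a b - (I + J)) with ((RInt f a b - I) + (RInt g a b - J)) by ring.
    eapply Rle_lt_trans. apply Rabs_triang. lra.
Qed.

Lemma RIscal (f : R -> R) a b c : ex_RInt f a b -> RInt (fun x => c * f x) a b = c * RInt f a b.
Proof. intros. apply (RInt_scal (V:=R_CompleteNormedModule) f a b c); auto. Qed.

Lemma imp_scal (f : R -> R) c I : improper_int01 f I -> improper_int01 (fun x => c * f x) (c * I).
Proof.
  intros Hf. destruct (RInt_of_imp f I Hf) as [Hex Hl]. apply imp_of_RInt.
  - intros. apply (ex_RInt_scal (V:=R_NormedModule) f a b c); auto.
  - intros eps He. destruct (Hl (eps / (Rabs c + 1))) as [d [Hd H]].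
    { apply Rdiv_lt_0_compat; auto. generalize (Rabs_pos c); lra. }
    exists (Rmin d (1/2)). split. apply Rmin_glb_lt; lra.
    intros a b Ha Hb. generalize (Rmin_l d (1/2)) (Rmin_r d (1/2)). intros m1 m2.
    rewrite (RIscal f a b c) by (apply Hex; lra).
    replace (c * RInt f a b - c * I) with (c * (RInt f a b - I)) by ring.
    rewrite Rabs_mult.
    generalize (H a b ltac:(lra) ltac:(lra)). intro h.
    assert (Rabs (RInt f a b - I) * (Rabs c + 1) < eps).
    { apply Rmult_lt_reg_r with (/ (Rabs c + 1)). apply Rinv_0_lt_compat. generalize (Rabs_pos c); lra.
      rewrite Rmult_assoc, Rinv_r. lra. generalize (Rabs_pos c); lra. }
    generalize (Rabs_pos (RInt f a b - I)). nra.
Qed.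

Lemma imp_nonneg (k : R -> R) B :
  (forall a b, 0 < a -> a <= b -> b < 1 -> ex_RInt k a b) ->
  (forall x, 0 < x < 1 -> 0 <= k x) ->
  (forall a b, 0 < a -> a <= b -> b < 1 -> RInt k a b <= B) ->
  exists I, improper_int01 k I /\ 0 <= I /\
    (forall B', (forall a b, 0 < a -> a <= b -> b < 1 -> RInt k a b <= B') -> I <= B').
Proof.
  intros Hex Hpos Hb.
  set (E := fun y => exists a b, 0 < a /\ a <= b /\ b < 1 /\ y = RInt k a b).
  assert (Ege : forall a b, 0 < a -> a <= b -> b < 1 -> 0 <= RInt k a b).
  { intros. apply RInt_ge_0; auto. intros; apply Hpos; lra. }
  destruct (completeness E) as [I [HI1 HI2]].
  - exists B. intros y [a [b [? [? [? ->]]]]]. auto.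
  - exists (RInt k (1/2) (1/2)). exists (1/2), (1/2). repeat split; lra.
  assert (I0 : 0 <= I).
  { apply Rle_trans with (RInt k (1/2) (1/2)). apply Ege; lra. apply HI1. exists (1/2), (1/2). repeat split; lra. }
  exists I. split; [|split; auto].
  - apply imp_of_RInt; auto.
    intros eps He.
    assert (Hy : exists a0 b0, 0 < a0 /\ a0 <= b0 /\ b0 < 1 /\ I - eps < RInt k a0 b0).
    { apply NNPP; intro Hn. assert (I <= I - eps). { apply HI2. intros y [a [b [? [? [? ->]]]]].
        apply Rnot_lt_le. intro. apply Hn. exists a, b. repeat split; auto. } lra. }
    destruct Hy as [a0 [b0 [h1 [h2 [h3 h4]]]]].
    exists (Rmin (Rmin a0 (1 - b0)) (1/2)). split. repeat apply Rmin_glb_lt; lra.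
    intros a b Ha Hb2.
    generalize (Rmin_l (Rmin a0 (1 - b0)) (1/2)) (Rmin_r (Rmin a0 (1 - b0)) (1/2)) (Rmin_l a0 (1 - b0)) (Rmin_r a0 (1 - b0)). intros m1 m2 m3 m4.
    assert (Hab : RInt k a b = RInt k a a0 + RInt k a0 b0 + RInt k b0 b).
    { rewrite Rplus_assoc, (RIC k a0 b0 b) by (apply Hex; lra). rewrite (RIC k a a0 b) by (apply Hex; lra). reflexivity. }
    assert (RInt k a b <= I) by (apply HI1; exists a, b; repeat split; lra).
    generalize (Ege a a0 ltac:(lra) ltac:(lra) ltac:(lra)) (Ege b0 b ltac:(lra) ltac:(lra) ltac:(lra)). intros.
    apply Rabs_def1; lra.
  - intros B' HB'. apply HI2. intros y [a [b [? [? [? ->]]]]]. auto.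
Qed.

Lemma imp_const c : improper_int01 (fun _ => c) c.
Proof.
  apply imp_of_RInt. intros; apply ex_RInt_const.
  intros eps He. exists (Rmin (1/2) (eps / (2 * (Rabs c + 1)))). split.
  apply Rmin_glb_lt. lra. apply Rdiv_lt_0_compat; auto. generalize (Rabs_pos c); lra.
  intros a b Ha Hb.
  generalize (Rmin_l (1/2) (eps / (2 * (Rabs c + 1)))) (Rmin_r (1/2) (eps / (2 * (Rabs c + 1)))). intros m1 m2.
  rewrite (RInt_const (V:=R_CompleteNormedModule)). unfold scal; simpl; unfold mult; simpl.
  replace ((b - a) * c - c) with (- (c * (1 - b + a))) by ring. rewrite Rabs_Ropp, Rabs_mult.
  rewrite (Rabs_pos_eq (1 - b + a)) by lra.
  assert (Rabs c * (2 * (eps / (2 * (Rabs c + 1)))) < eps).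
  { replace (Rabs c * (2 * (eps / (2 * (Rabs c + 1))))) with (eps * (Rabs c / (Rabs c + 1))) by (field; generalize (Rabs_pos c); lra).
    assert (Rabs c / (Rabs c + 1) < 1). { apply Rmult_lt_reg_r with (Rabs c + 1). generalize (Rabs_pos c); lra.
      unfold Rdiv. rewrite Rmult_assoc, Rinv_l. lra. generalize (Rabs_pos c); lra. }
    nra. }
  assert (Rabs c * (1 - b + a) <= Rabs c * (2 * (eps / (2 * (Rabs c + 1))))).
  { apply Rmult_le_compat_l. apply Rabs_pos. lra. }
  lra.
Qed.

Lemma imp_q M : improper_int01 (qv M) 1.
Proof.
  apply imp_of_RInt.
  - intros. exists (Qfun M b - Qfun M a). apply q_RInt; auto.
  - intros eps He. destruct (Q_lim0 M (eps/2)) as [d1 [Hd1 H1]]. lra.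
    destruct (Q_lim1 M (eps/2)) as [d2 [Hd2 H2]]. lra.
    exists (Rmin (Rmin d1 d2) (1/2)). split. repeat apply Rmin_glb_lt; lra.
    intros a b Ha Hb.
    generalize (Rmin_l (Rmin d1 d2) (1/2)) (Rmin_r (Rmin d1 d2) (1/2)) (Rmin_l d1 d2) (Rmin_r d1 d2). intros m1 m2 m3 m4.
    rewrite (is_RInt_unique (V:=R_CompleteNormedModule) _ _ _ _ (q_RInt M a b ltac:(lra) ltac:(lra) ltac:(lra))).
    generalize (H1 a ltac:(lra)) (H2 b ltac:(lra)) (Qfun_bounds M a) (Qfun_bounds M b). intros.
    apply Rabs_def1; lra.
Qed.

Definition gmono (g : R -> R) := forall x y, 0 < x -> x <= y -> y < 1 -> g x <= g y.

Lemma ex_pc (g h F : R -> R) (L : list R) a b : 0 < a -> a <= b -> b < 1 ->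
  (forall x, 0 < x < 1 -> In (g x) L) -> gmono g -> (forall x, 0 < x < 1 -> continuous h x) ->
  ex_RInt (fun x => h x * F (g x)) a b.
Proof.
  intros. apply pc_int with L; auto.
  - intros; apply H4; lra.
  - intros; apply H3; lra.
  - intros; apply H2; lra.
Qed.

Lemma I1_abs (g vf : R -> R) (L : list R) x1 xN :
  (forall x, 0 < x < 1 -> x1 <= g x <= xN) -> (forall x, 0 < x < 1 -> In (g x) L) -> gmono g ->
  (forall y, x1 <= y -> vf y <= 0) -> (forall y, x1 <= y -> vf x1 <= vf y) ->
  1 + vf x1 <= int01 (fun x => 1 + vf (g x)) <= 1.
Proof.
  intros Hr HL Hm Hneg Hinc.
  set (k := fun x => vf (g x) - vf x1).
  assert (Hex : forall a b, 0 < a -> a <= b -> b < 1 -> ex_RInt k a b).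
  { intros. apply ex_RInt_ext_R with (fun x => (fun _ => 1) x * (fun y => vf y - vf x1) (g x)).
    - intros; unfold k; ring.
    - apply (ex_pc g (fun _ => 1) (fun y => vf y - vf x1) L a b); auto. intros; apply continuous_const. }
  assert (v1 : vf x1 <= 0) by (apply Hneg; lra).
  destruct (imp_nonneg k (- vf x1) Hex) as [J [HJ [J0 JB]]].
  - intros x Hx. unfold k. generalize (Hinc (g x) ltac:(generalize (Hr x Hx); lra)). lra.
  - intros a b Ha Hab Hb. apply Rle_trans with (RInt (fun _ => - vf x1) a b).
    + apply RInt_le; auto. apply ex_RInt_const. intros x Hx. unfold k.
      generalize (Hneg (g x) ltac:(generalize (Hr x ltac:(lra)); lra)). lra.
    + rewrite (RInt_const (V:=R_CompleteNormedModule)). unfold scal; simpl; unfold mult; simpl. nra.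
  - assert (JB' : J <= - vf x1).
    { apply JB. intros a b Ha Hab Hb. apply Rle_trans with (RInt (fun _ => - vf x1) a b).
      + apply RInt_le; auto. apply ex_RInt_const. intros x Hx. unfold k.
        generalize (Hneg (g x) ltac:(generalize (Hr x ltac:(lra)); lra)). lra.
      + rewrite (RInt_const (V:=R_CompleteNormedModule)). unfold scal; simpl; unfold mult; simpl. nra. }
    rewrite (int01_eq _ (1 + vf x1 + J)). lra.
    apply imp_ext with (fun x => (fun _ => 1 + vf x1) x + k x).
    + intros. unfold k. ring.
    + apply imp_plus. apply imp_const. auto.
Qed.

Lemma Qfun_le M a b : 0 < a -> a <= b -> b < 1 -> Qfun M a <= Qfun M b.
Proof.
  intros. generalize (is_RInt_unique (V:=R_CompleteNormedModule) _ _ _ _ (q_RInt M a b H H0 H1)). intro E.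
  assert (0 <= RInt (qv M) a b).
  { apply RInt_ge_0; auto. exists (Qfun M b - Qfun M a). apply q_RInt; auto. intros; left; apply qv_pos. }
  simpl in E. lra.
Qed.

Section I2.
End I2.

Lemma k2_ex (g : R -> R) L M e x1 a b : 0 < a -> a <= b -> b < 1 ->
  (forall x, 0 < x < 1 -> In (g x) L) -> gmono g ->
  ex_RInt (fun x => e * qv M x * (g x - x1)) a b.
Proof.
  intros. apply (ex_pc g (fun x => e * qv M x) (fun y => y - x1) L a b); auto.
  intros. apply (continuous_mult (K:=R_AbsRing)). apply continuous_const. apply qv_cont; auto.
Qed.

Lemma k2_bound (g : R -> R) L M e x1 xN a b : 0 < e -> 0 < a -> a <= b -> b < 1 ->
  (forall x, 0 < x < 1 -> x1 <= g x <= xN) -> (forall x, 0 < x < 1 -> In (g x) L) -> gmono g ->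
  RInt (fun x => e * qv M x * (g x - x1)) a b <= e * (xN - x1) * (Qfun M b - Qfun M a).
Proof.
  intros He Ha Hab Hb Hr HL Hm.
  assert (Hq : ex_RInt (qv M) a b) by (exists (Qfun M b - Qfun M a); apply q_RInt; auto).
  apply Rle_trans with (RInt (fun x => e * (xN - x1) * qv M x) a b).
  - apply RInt_le; auto. apply (k2_ex g L); auto.
    apply (ex_RInt_scal (V:=R_NormedModule) (qv M) a b (e * (xN - x1))); auto.
    intros x Hx. generalize (Hr x ltac:(lra)) (qv_pos M x). intros. 
    assert (e * qv M x * (g x - x1) <= e * qv M x * (xN - x1)).
    { apply Rmult_le_compat_l. generalize (qv_pos M x); nra. lra. }
    lra.
  - rewrite RIscal by auto.
    rewrite (is_RInt_unique (V:=R_CompleteNormedModule) _ _ _ _ (q_RInt M a b Ha Hab Hb)). right; reflexivity.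
Qed.

Lemma I2_abs (g : R -> R) L M e x1 xN : 0 < e ->
  (forall x, 0 < x < 1 -> x1 <= g x <= xN) -> (forall x, 0 < x < 1 -> In (g x) L) -> gmono g ->
  exists J, int01 (fun x => e * qBS M x * g x) = e * x1 + J /\ 0 <= J /\ J <= e * (xN - x1) /\
    forall B', (forall a b, 0 < a -> a <= b -> b < 1 -> RInt (fun x => e * qv M x * (g x - x1)) a b <= B') -> J <= B'.
Proof.
  intros He Hr HL Hm.
  set (k := fun x => e * qv M x * (g x - x1)).
  assert (HB : forall a b, 0 < a -> a <= b -> b < 1 -> RInt k a b <= e * (xN - x1)).
  { intros a b Ha Hab Hb. eapply Rle_trans. apply (k2_bound g L M e x1 xN a b); auto.
    generalize (Qfun_bounds M a) (Qfun_bounds M b) (Qfun_le M a b Ha Hab Hb). intros.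
    assert (x1 <= xN) by (generalize (Hr (1/2) ltac:(lra)); lra).
    assert (0 <= e * (xN - x1)) by nra. nra. }
  destruct (imp_nonneg k (e * (xN - x1))) as [J [HJ [J0 JB]]]; auto.
  - intros. apply (k2_ex g L); auto.
  - intros x Hx. unfold k. generalize (Hr x Hx) (qv_pos M x). intros. 
    apply Rmult_le_pos. nra. lra.
  - exists J. split; [|split; [auto|split; auto]].
    apply int01_eq.
    apply imp_ext with (fun x => (fun x => (e * x1) * qv M x) x + k x).
    + intros x Hx. unfold k. rewrite qBS_eq by auto. ring.
    + apply imp_plus; auto. assert (H := imp_scal (qv M) (e*x1) 1 (imp_q M)). rewrite Rmult_1_r in H. exact H.
Qed.

Lemma k2_tail (g : R -> R) L M e x1 xN b0 a b : 0 < e -> 0 < b0 < 1 -> 0 < a -> a <= b -> b < 1 ->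
  (forall x, 0 < x < 1 -> x1 <= g x <= xN) -> (forall x, 0 < x < 1 -> In (g x) L) -> gmono g ->
  (forall x, 0 < x <= b0 -> g x = x1) ->
  RInt (fun x => e * qv M x * (g x - x1)) a b <= e * (xN - x1) * (1 - Qfun M b0).
Proof.
  intros He Hb0 Ha Hab Hb Hr HL Hm Ht.
  assert (x1 <= xN) by (generalize (Hr (1/2) ltac:(lra)); lra).
  assert (Z : forall a' b', 0 < a' -> a' <= b' -> b' <= b0 -> RInt (fun x => e * qv M x * (g x - x1)) a' b' = 0).
  { intros a' b' ? ? ?. rewrite (RInt_ext _ (fun _ => 0)).
    rewrite (RInt_const (V:=R_CompleteNormedModule)). unfold scal; simpl; unfold mult; simpl. ring.
    intros x Hx. rewrite Rmin_left, Rmax_right in Hx by lra. rewrite Ht by lra. rewrite Rminus_eq_0. apply Rmult_0_r. }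
  generalize (Qfun_bounds M b0). intro QB.
  destruct (Rle_dec b b0).
  - rewrite Z by lra. assert (0 <= e * (xN - x1)) by nra. nra.
  - destruct (Rle_dec b0 a).
    + eapply Rle_trans. apply (k2_bound g L M e x1 xN a b); auto.
      generalize (Qfun_le M b0 a ltac:(lra) ltac:(lra) ltac:(lra)) (Qfun_bounds M b). intros.
      apply Rmult_le_compat_l. nra. lra.
    + rewrite <- (RIC _ a b0 b) by (apply (k2_ex g L); auto; lra).
      rewrite Z by lra. rewrite Rplus_0_l.
      eapply Rle_trans. apply (k2_bound g L M e x1 xN b0 b); auto; lra.
      generalize (Qfun_bounds M b). intros.
      apply Rmult_le_compat_l. nra. lra.
Qed.

Lemma Mpar_nonneg mu r sigma dt : sigma > 0 -> 0 <= Mpar mu r sigma dt.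
Proof.
  intros. unfold Mpar. apply Rle_mult_inv_pos; auto.
  apply Rmult_le_pos. apply Rabs_pos. apply sqrt_pos.
Qed.

Lemma pw_pos s C : 0 < s -> 0 < powerRZ s (Z.of_nat C - 1).
Proof. intros. apply powerRZ_lt; auto. Qed.

Lemma g_eq xs vf mu r sigma dt s C eta x : 0 < x < 1 ->
  fEta (vE xs vf) mu r sigma dt s C eta x =
  dagger (vE xs vf) (eta * powerRZ s (Z.of_nat C - 1) * exp (- r * dt) * qv (Mpar mu r sigma dt) x).
Proof. intros. unfold fEta. rewrite qBS_eq; auto. Qed.

Lemma arg_pos s C r dt eta M x : 0 < s -> 0 < eta ->
  0 < eta * powerRZ s (Z.of_nat C - 1) * exp (- r * dt) * qv M x.
Proof.
  intros. repeat apply Rmult_lt_0_compat; auto. apply pw_pos; auto. apply exp_pos. apply qv_pos.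
Qed.

Lemma g_props N xs vf mu r sigma dt s C eta : vgood N xs vf -> sigma > 0 -> 0 < s -> 0 < eta ->
  (forall x, 0 < x < 1 -> xs 1%nat <= fEta (vE xs vf) mu r sigma dt s C eta x <= xs N) /\
  (forall x, 0 < x < 1 -> In (fEta (vE xs vf) mu r sigma dt s C eta x) (map xs (seq 1 N))) /\
  gmono (fun x => fEta (vE xs vf) mu r sigma dt s C eta x).
Proof.
  intros HV Hsig Hs He. split; [|split].
  - intros x Hx. rewrite g_eq by auto. apply (vd_range N); auto. apply arg_pos; auto.
  - intros x Hx. rewrite g_eq by auto.
    destruct (vd_val N xs vf _ HV (arg_pos s C r dt eta (Mpar mu r sigma dt) x Hs He)) as [i [Hi ->]].
    apply in_map. apply in_seq. lia.
  - intros x y Hx Hxy Hy. rewrite !g_eq by lra. apply (vd_mono N); auto. apply arg_pos; auto.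
    generalize (qv_noninc (Mpar mu r sigma dt) x y (Mpar_nonneg mu r sigma dt Hsig) Hx Hxy Hy).
    intro. apply Rmult_le_compat_l; auto.
    generalize (pw_pos s C Hs) (exp_pos (- r * dt)). intros. 
    apply Rmult_le_pos; [apply Rmult_le_pos|]; lra.
Qed.

Lemma g_tail N xs vf mu r sigma dt s C b0 : vgood N xs vf -> sigma > 0 -> 0 < s -> 0 < b0 < 1 ->
  (forall x, xs 1%nat <= x -> vf x <= 0) ->
  exists eta0, 0 < eta0 /\ forall eta, eta0 <= eta -> forall x, 0 < x <= b0 ->
    fEta (vE xs vf) mu r sigma dt s C eta x = xs 1%nat.
Proof.
  intros HV Hsig Hs Hb0 Hneg.
  destruct (vd_big N xs vf HV Hneg) as [P [HP HPb]].
  set (c := powerRZ s (Z.of_nat C - 1) * exp (- r * dt) * qv (Mpar mu r sigma dt) b0).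
  assert (Hc : 0 < c).
  { unfold c. repeat apply Rmult_lt_0_compat. apply pw_pos; auto. apply exp_pos. apply qv_pos. }
  exists (P / c). split. apply Rdiv_lt_0_compat; auto.
  intros eta Heta x Hx. rewrite g_eq by lra. apply HPb.
  generalize (qv_noninc (Mpar mu r sigma dt) x b0 (Mpar_nonneg mu r sigma dt Hsig) ltac:(lra) ltac:(lra) ltac:(lra)).
  intro Hq.
  assert (P <= eta * c).
  { apply Rmult_le_reg_r with (/ c). apply Rinv_0_lt_compat; auto.
    rewrite Rmult_assoc, Rinv_r by lra. rewrite Rmult_1_r. exact Heta. }
  apply Rle_trans with (eta * c). auto.
  unfold c. rewrite <- !Rmult_assoc.
  apply Rmult_le_compat_l; auto.
  generalize (pw_pos s C Hs) (exp_pos (- r * dt)). intros.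
  assert (0 < eta) by (apply Rlt_le_trans with (P / c); auto; apply Rdiv_lt_0_compat; auto).
  repeat apply Rmult_le_pos; lra.
Qed.

Lemma p_big s I1 dt eta vx1 : 0 < s < 1 -> dt > 0 -> eta > 0 -> vx1 <= 0 -> 1 + vx1 <= I1 <= 1 ->
  0 < 1 - s * (1 + vx1) /\ eta / (dt * (1 - s * (1 + vx1))) <= - (eta / dt) * / (-1 + s * I1).
Proof.
  intros Hs Hdt He Hv HI.
  assert (Hhi : 0 < 1 - s * (1 + vx1)) by nra.
  split; auto.
  assert (HD1 : -1 + s * I1 <= s - 1) by nra.
  assert (HD2 : - (1 - s * (1 + vx1)) <= -1 + s * I1) by nra.
  replace (- (eta / dt) * / (-1 + s * I1)) with ((eta / dt) / (1 - s * I1)) by (field; split; lra).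
  replace (eta / (dt * (1 - s * (1 + vx1)))) with ((eta / dt) / (1 - s * (1 + vx1))) by (field; lra).
  apply Rmult_le_compat_l. apply Rlt_le, Rdiv_lt_0_compat; lra.
  apply Rinv_le_contravar; lra.
Qed.

Lemma sC_bounds s C : 0 < s < 1 -> (C = 0%nat \/ C = 1%nat) -> 0 < s ^ C <= 1.
Proof. intros Hs [->| ->]; simpl; lra. Qed.

Theorem mainTheorem11
  (mu r sigma dt s : R) (C N : nat) (xs : nat -> R) (vf : R -> R) (u : efun) :
  sigma > 0 -> dt > 0 ->
  0 < s < 1 ->
  (C = 0%nat \/ C = 1%nat) ->
  (* grid x_1 < ... < x_N *)
  (1 <= N)%nat ->
  (forall i, (1 <= i)%nat -> (i < N)%nat -> xs i < xs (S i)) ->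
  (* v : -oo below x_1, piecewise linear on the grid, constant above x_N *)
  let v := mkEfun (fun x => xs 1%nat <= x) vf in
  (forall i, (1 <= i)%nat -> (i < N)%nat -> forall x, xs i <= x <= xs (S i) ->
     vf x = vf (xs i) + (vf (xs (S i)) - vf (xs i)) / (xs (S i) - xs i) * (x - xs i)) ->
  (forall x, xs N <= x -> vf x = vf (xs N)) ->
  econcave v -> eincreasing v ->
  (forall x, xs 1%nat <= x -> vf x <= 0) ->
  (* u concave increasing, u^dagger finite and continuous on (0,oo), -> oo at 0 *)
  econcave u -> eincreasing u ->
  (forall p, p > 0 -> exists g, is_glb (fun x => superdiff u x p) g) ->
  (forall p, p > 0 -> continuity_pt (dagger u) p) ->
  (forall K, exists d, d > 0 /\ forall p, 0 < p < d -> dagger u p > K) ->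
  (* conclusion: lim_{eta -> oo} X^eta = gamma_min + s^C e^{-r dt} x_1 *)
  (forall gmin, is_glb (edom u) gmin ->
     lim_pinfty (XEta u v mu r sigma dt s C) (gmin + s ^ C * exp (- r * dt) * xs 1%nat)) /\
  ((forall m, exists x, edom u x /\ x < m) ->
     to_minfty_at_pinfty (XEta u v mu r sigma dt s C)).
Proof.
  intros Hsig Hdt Hs HC HN Hgrid v Hlin Hconst Hvc Hvi Hvneg Huc Hui Hglb Hcont Hinf.
  assert (HV : vgood N xs vf) by (repeat split; auto).
  set (M := Mpar mu r sigma dt).
  set (e := exp (- r * dt)). assert (He : 0 < e) by apply exp_pos.
  assert (Hvinc : forall y, xs 1%nat <= y -> vf (xs 1%nat) <= vf y).
  { intros y Hy. destruct (Hvi (xs 1%nat) y Hy) as [_ H]. simpl; lra. exact H. }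
  assert (Hv1 : vf (xs 1%nat) <= 0) by (apply Hvneg; lra).
  assert (Hx1N : xs 1%nat <= xs N) by (apply (grid_le N xs vf); auto; lia).
  set (hi := 1 - s * (1 + vf (xs 1%nat))).
  assert (Hhi : 0 < hi) by (unfold hi; nra).
  destruct (sC_bounds s C Hs HC) as [sC0 sC1].
  assert (Key : forall eta, eta > 0 ->
    exists J, XEta u v mu r sigma dt s C eta =
      dagger u (- (eta / dt) * / (-1 + s * int01 (fun x => 1 + eval v (fEta v mu r sigma dt s C eta x))))
      + s ^ C * (e * xs 1%nat + J) /\
      0 <= J /\ J <= e * (xs N - xs 1%nat) /\
      (forall B', (forall a b, 0 < a -> a <= b -> b < 1 ->
         RInt (fun x => e * qv M x * (fEta v mu r sigma dt s C eta x - xs 1%nat)) a b <= B') -> J <= B') /\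
      eta / (dt * hi) <= - (eta / dt) * / (-1 + s * int01 (fun x => 1 + eval v (fEta v mu r sigma dt s C eta x)))).
  { intros eta Heta.
    destruct (g_props N xs vf mu r sigma dt s C eta HV Hsig ltac:(lra) Heta) as [Gr [GL Gm]].
    destruct (I2_abs _ _ M e (xs 1%nat) (xs N) He Gr GL Gm) as [J [EJ [J0 [J1 JB]]]].
    exists J. split; [|split; [auto|split; [auto|split; [exact JB|]]]].
    - unfold XEta, gammaEta. fold e M. fold v in EJ. rewrite <- EJ. reflexivity.
    - assert (HI1 := I1_abs _ vf _ (xs 1%nat) (xs N) Gr GL Gm Hvneg Hvinc).
      apply (p_big s _ dt eta (vf (xs 1%nat))); auto. }
  split.
  - intros gmin Hgmin eps Heps.
    assert (Hx0 : exists x0, edom u x0 /\ x0 < gmin + eps / 2).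
    { apply NNPP. intro Hn. destruct Hgmin as [_ H2].
      assert (gmin + eps / 2 <= gmin).
      { apply H2. intros x Dx. apply Rnot_lt_le. intro. apply Hn. exists x; auto. } lra. }
    destruct Hx0 as [x0 [Dx0 Hx0]].
    destruct (ud_upper u (gmin + eps / 2) x0 Hui Hglb Dx0 Hx0) as [Pu HPu].
    set (eps' := eps / (2 * (e * (xs N - xs 1%nat) + 1))).
    assert (Heps' : 0 < eps').
    { unfold eps'. apply Rdiv_lt_0_compat; auto. nra. }
    destruct (Q_lim1 M eps' Heps') as [d [Hd Hdb]].
    set (b0 := 1 - d / 2).
    assert (Hb0 : 0 < b0 < 1) by (unfold b0; lra).
    assert (HQb0 : 1 - eps' < Qfun M b0) by (apply Hdb; unfold b0; lra).
    destruct (g_tail N xs vf mu r sigma dt s C b0 HV Hsig ltac:(lra) Hb0 Hvneg) as [eta0 [Heta0 Htail]].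
    exists (Rmax (Rmax eta0 1) (dt * hi * Rmax Pu 0 + 1)).
    intros eta Heta.
    generalize (Rmax_l (Rmax eta0 1) (dt * hi * Rmax Pu 0 + 1)) (Rmax_r (Rmax eta0 1) (dt * hi * Rmax Pu 0 + 1))
      (Rmax_l eta0 1) (Rmax_r eta0 1) (Rmax_l Pu 0) (Rmax_r Pu 0). intros m1 m2 m3 m4 m5 m6.
    assert (Hpos : eta > 0) by lra.
    destruct (Key eta Hpos) as [J [EX [J0 [J1 [JB Hp]]]]].
    set (p := - (eta / dt) * / (-1 + s * int01 (fun x => 1 + eval v (fEta v mu r sigma dt s C eta x)))) in *.
    assert (Hpp : p >= Pu).
    { assert (Rmax Pu 0 < eta / (dt * hi)).
      { apply Rmult_lt_reg_r with (dt * hi). nra. unfold Rdiv. rewrite Rmult_assoc, Rinv_l by nra. nra. }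
      lra. }
    assert (Hp0 : p > 0).
    { assert (0 < eta / (dt * hi)) by (apply Rdiv_lt_0_compat; nra). lra. }
    assert (Hgu : gmin <= dagger u p) by (apply ud_lower; auto).
    assert (Hgu' : dagger u p < gmin + eps / 2) by (apply HPu; auto).
    assert (HJ : J <= e * (xs N - xs 1%nat) * (1 - Qfun M b0)).
    { apply JB. intros a b Ha Hab Hb.
      destruct (g_props N xs vf mu r sigma dt s C eta HV Hsig ltac:(lra) Hpos) as [Gr [GL Gm]].
      apply (k2_tail _ (map xs (seq 1 N)) M e (xs 1%nat) (xs N) b0 a b); auto.
      intros x Hx. apply Htail; lra. }
    assert (HJe : e * (xs N - xs 1%nat) * (1 - Qfun M b0) < eps / 2).
    { assert (0 <= e * (xs N - xs 1%nat)) by nra.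
      assert (e * (xs N - xs 1%nat) * (1 - Qfun M b0) <= e * (xs N - xs 1%nat) * eps') by (apply Rmult_le_compat_l; lra).
      assert (e * (xs N - xs 1%nat) * eps' < eps / 2).
      { unfold eps'. replace (e * (xs N - xs 1%nat) * (eps / (2 * (e * (xs N - xs 1%nat) + 1))))
          with (eps / 2 * ((e * (xs N - xs 1%nat)) / (e * (xs N - xs 1%nat) + 1))) by (field; lra).
        assert ((e * (xs N - xs 1%nat)) / (e * (xs N - xs 1%nat) + 1) < 1).
        { apply Rmult_lt_reg_r with (e * (xs N - xs 1%nat) + 1). lra. unfold Rdiv.
          rewrite Rmult_assoc, Rinv_l by lra. lra. }
        nra. }
      lra. }
    rewrite EX. fold e.
    replace (dagger u p + s ^ C * (e * xs 1%nat + J) - (gmin + s ^ C * e * xs 1%nat))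
      with ((dagger u p - gmin) + s ^ C * J) by ring.
    assert (0 <= s ^ C * J) by nra.
    assert (s ^ C * J <= J) by nra.
    apply Rabs_def1; lra.
  - intros Hunb m.
    set (T := m - s ^ C * e * xs N - 1).
    destruct (Hunb T) as [x0 [Dx0 Hx0]].
    destruct (ud_upper u T x0 Hui Hglb Dx0 Hx0) as [Pu HPu].
    exists (Rmax 1 (dt * hi * Rmax Pu 0 + 1)).
    intros eta Heta.
    generalize (Rmax_l 1 (dt * hi * Rmax Pu 0 + 1)) (Rmax_r 1 (dt * hi * Rmax Pu 0 + 1))
      (Rmax_l Pu 0) (Rmax_r Pu 0). intros m1 m2 m5 m6.
    assert (Hpos : eta > 0) by lra.
    destruct (Key eta Hpos) as [J [EX [J0 [J1 [JB Hp]]]]].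
    set (p := - (eta / dt) * / (-1 + s * int01 (fun x => 1 + eval v (fEta v mu r sigma dt s C eta x)))) in *.
    assert (Hpp : p >= Pu).
    { assert (Rmax Pu 0 < eta / (dt * hi)).
      { apply Rmult_lt_reg_r with (dt * hi). nra. unfold Rdiv. rewrite Rmult_assoc, Rinv_l by nra. nra. }
      lra. }
    assert (Hgu' : dagger u p < T) by (apply HPu; auto).
    rewrite EX. unfold T in Hgu'.
    assert (s ^ C * (e * xs 1%nat + J) <= s ^ C * (e * xs N)).
    { apply Rmult_le_compat_l. lra. nra. }
    lra.
Qed.
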